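(* Let $p>0$, $m>0$, and let $N$ be a random variable on $\mathbb{N}_0$ with the Abel probability mass function \[ f(n)=\mathbb{P}(N=n)=\frac{p\,(p+n)^{n-1}}{n!}\exp\Big(n\Big(\log\frac{m}{m+p}-\frac{m}{m+p}\Big)-\frac{mp}{m+p}\Big),\quad n\in\mathbb{N}_0 . \] Let $b(n)=\frac{1}{\sqrt{n+1}}\Big(\sqrt{1+\tfrac1n}-1\Big)$ for $n\in\mathbb{N}=\{1,2,\dots\}$. Then there is a constant $C$ not depending on $n$ such that \[ f(n\mid n\ge 1):=\mathbb{P}(N=n\mid N\ge 1)\le C\,b(n)\qquad\text{for all } n=1,2,\ldots. \]
   Context: $b$ is the probability mass function of $\lfloor U^{-2}\rfloor$ for $U$ uniform on $(0,1)$. The constant $C$ may depend on $p$ and $m$. *)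

(* Defs.v *)
From Stdlib Require Import Reals Arith.
Open Scope R_scope.

(* Abel probability mass function f(n) = P(N = n), n in N_0.
   (p+n)^(n-1) is the real power; for n = 0 it is p^(-1). *)
Definition abel_pmf (p m : R) (n : nat) : R :=
  p * Rpower (p + INR n) (INR n - 1) / INR (Factorial.fact n)
  * exp (INR n * (ln (m / (m + p)) - m / (m + p)) - m * p / (m + p)).

(* P(N >= 1) = 1 - P(N = 0), since abel_pmf is the pmf of N. *)
Definition abel_tail (p m : R) : R := 1 - abel_pmf p m 0.

Definition abel_cond (p m : R) (n : nat) : R := abel_pmf p m n / abel_tail p m.

Definition bfun (n : nat) : R :=
  / sqrt (INR n + 1) * (sqrt (1 + / INR n) - 1).

(* Main.v *)
Require Import Defs.
From Stdlib Require Import Reals Lra Lia Psatz.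
Open Scope R_scope.

Lemma pow_exp (x : R) (n : nat) : exp x ^ n = exp (INR n * x).
Proof.
  induction n as [|n IH].
  - simpl. rewrite Rmult_0_l, exp_0. reflexivity.
  - rewrite S_INR. simpl. rewrite IH, <- exp_plus. f_equal. ring.
Qed.

Lemma K0 (x : R) (n : nat) : 0 <= x -> (x + INR n) ^ n <= INR n ^ n * exp x.
Proof.
  intros hx. destruct n as [|n].
  - simpl. pose proof (exp_ineq1_le x). lra.
  - set (k := INR (S n)).
    assert (hk : 0 < k) by (unfold k; apply lt_0_INR; lia).
    replace (x + k) with (k * (1 + x / k)) by (field; lra).
    rewrite Rpow_mult_distr.
    apply Rmult_le_compat_l. { apply pow_le. lra. }
    replace (exp x) with (exp (x / k) ^ S n).
    + apply pow_incr. split.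
      * assert (0 <= x / k) by (unfold Rdiv; apply Rmult_le_pos; [lra|left; apply Rinv_0_lt_compat; lra]). lra.
      * apply exp_ineq1_le.
    + rewrite pow_exp. fold k. f_equal. field. lra.
Qed.

Lemma K1 (n : nat) : INR n ^ n <= INR (Factorial.fact n) * exp (INR n).
Proof.
  induction n as [|n IH].
  - simpl. rewrite exp_0. lra.
  - rewrite fact_simpl, mult_INR, S_INR.
    simpl pow.
    pose proof (K0 1 n ltac:(lra)) as H.
    rewrite Rplus_comm in H.
    rewrite exp_plus.
    assert (0 <= INR n) by apply pos_INR.
    assert (0 < exp 1) by apply exp_pos.
    rewrite Rmult_assoc. apply Rmult_le_compat_l. { lra. }
    apply Rle_trans with (INR n ^ n * exp 1); [exact H|].
    replace (INR (Factorial.fact n) * (exp (INR n) * exp 1)) with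
      ((INR (Factorial.fact n) * exp (INR n)) * exp 1) by ring.
    apply Rmult_le_compat_r; lra.
Qed.

Lemma inv_lt1 (x : R) : 1 < x -> / x < 1.
Proof. intros h. rewrite <- Rinv_1. apply Rinv_lt_contravar; lra. Qed.

Theorem mainTheorem3 (p m : R) (hp : 0 < p) (hm : 0 < m) :
  exists C : R, forall n : nat, (1 <= n)%nat -> abel_cond p m n <= C * bfun n.
Proof.
  set (q := m / (m + p)).
  set (s := m * p / (m + p)).
  assert (hq0 : 0 < q) by (unfold q; apply Rdiv_lt_0_compat; lra).
  assert (hq1 : q < 1) by (unfold q; apply Rmult_lt_reg_r with (m + p); [lra|];
     field_simplify; lra).
  assert (hs : 0 < s) by (unfold s; apply Rdiv_lt_0_compat; nra).
  set (d := - (ln q - q + 1)).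
  assert (hd : 0 < d).
  { unfold d. assert (q < exp (q - 1)) by (pose proof (exp_ineq1 (q-1)); lra).
    assert (ln q < ln (exp (q - 1))) by (apply ln_increasing; lra).
    rewrite ln_exp in *. lra. }
  set (T := abel_tail p m).
  assert (hT0 : abel_pmf p m 0 = exp (- s)).
  { unfold abel_pmf. simpl INR. simpl Factorial.fact. unfold Rpower.
    replace ((0 - 1) * ln (p + 0)) with (- ln p) by (rewrite Rplus_0_r; ring).
    rewrite exp_Ropp, exp_ln by lra. fold q. fold s.
    replace (0 * (ln q - q) - s) with (- s) by ring. simpl INR. field. lra. }
  assert (hT : 0 < T).
  { unfold T, abel_tail. rewrite hT0. rewrite exp_Ropp.
    pose proof (exp_ineq1 s ltac:(lra)).
    assert (/ exp s < 1). { apply inv_lt1; lra. } lra. }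
  set (A := p * exp p / T).
  set (K := 1 + / d).
  assert (hA : 0 < A) by (unfold A; pose proof (exp_pos p);
     apply Rdiv_lt_0_compat; nra).
  assert (hK : 0 < K) by (unfold K; pose proof (Rinv_0_lt_compat d hd); lra).
  exists (3 * A * K).
  intros n hn.
  assert (hn0 : 1 <= INR n) by (apply (le_INR 1); exact hn).
  assert (hsq : 0 < sqrt (INR n + 1)) by (apply sqrt_lt_R0; lra).
  assert (hsqle : sqrt (INR n + 1) <= INR n + 1).
  { pose proof (sqrt_sqrt (INR n + 1) ltac:(lra)). nra. }
  assert (H1 : abel_cond p m n <= A * exp (- (d * INR n)) / INR n).
  { unfold abel_cond. fold T. unfold A.
    unfold Rdiv. rewrite (Rmult_comm (p * exp p) (/ T)).
    rewrite Rmult_comm. rewrite !Rmult_assoc.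
    apply Rmult_le_compat_l. { left. apply Rinv_0_lt_compat. exact hT. }
    unfold abel_pmf. fold q s.
    assert (hR : Rpower (p + INR n) (INR n - 1) = (p + INR n) ^ n / (p + INR n)).
    { unfold Rpower. replace ((INR n - 1) * ln (p + INR n)) with
        (INR n * ln (p + INR n) + - ln (p + INR n)) by ring.
      rewrite exp_plus, exp_Ropp, exp_ln by lra.
      rewrite <- (Rpower_pow n (p + INR n)) by lra. unfold Rpower. reflexivity. }
    rewrite hR.
    pose proof (K0 p n ltac:(lra)) as H0.
    pose proof (K1 n) as H2.
    assert (hf : 0 < INR (Factorial.fact n)) by apply INR_fact_lt_0.
    assert (he : exp (INR n * (ln q - q) - s) = exp (- (d * INR n)) * exp (- INR n) * exp (- s)).
    { rewrite <- !exp_plus. f_equal. unfold d. ring. }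
    rewrite he.
    assert (hpn : (p + INR n) ^ n <= INR (Factorial.fact n) * exp (INR n) * exp p).
    { apply Rle_trans with (INR n ^ n * exp p); [exact H0|].
      apply Rmult_le_compat_r; [left; apply exp_pos|exact H2]. }
    assert (hee : exp (INR n) * exp (- INR n) = 1).
    { rewrite <- exp_plus. rewrite Rplus_opp_r. apply exp_0. }
    assert (hs1 : exp (- s) <= 1).
    { rewrite exp_Ropp. pose proof (exp_ineq1 s ltac:(lra)).
      left. apply inv_lt1; lra. }
    pose proof (exp_pos (- s)). pose proof (exp_pos (- (d * INR n))).
    pose proof (exp_pos (- INR n)). pose proof (exp_pos p).
    set (X := (p + INR n) ^ n) in *.
    set (F := INR (Factorial.fact n)) in *.
    set (Ed := exp (- (d * INR n))) in *.
    set (En := exp (INR n)) in *. set (Em := exp (- INR n)) in *.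
    set (Es := exp (- s)) in *. set (Ep := exp p) in *.
    assert (hX : 0 <= X) by (unfold X; apply pow_le; lra).
    apply Rle_trans with (p * (X / INR n) / F * (Ed * Em)).
    { unfold Rdiv. apply Rmult_le_compat.
      - apply Rmult_le_pos; [|left; apply Rinv_0_lt_compat; lra].
        apply Rmult_le_pos; [lra|]. apply Rmult_le_pos; [lra|].
        left; apply Rinv_0_lt_compat; lra.
      - left. apply Rmult_lt_0_compat; [|lra]. apply Rmult_lt_0_compat; lra.
      - apply Rmult_le_compat_r; [left; apply Rinv_0_lt_compat; lra|].
        apply Rmult_le_compat_l; [lra|]. apply Rmult_le_compat_l; [lra|].
        apply Rinv_le_contravar; lra.
      - assert (0 < Ed * Em) by (apply Rmult_lt_0_compat; lra). nra. }
    replace (p * (X / INR n) / F * (Ed * Em)) with ((X / F) * Em * (p * Ed / INR n))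
      by (field; lra).
    replace (p * (Ep * (Ed * / INR n))) with (Ep * (p * Ed / INR n)) by (field; lra).
    apply Rmult_le_compat_r. { unfold Rdiv; apply Rmult_le_pos; [nra|left; apply Rinv_0_lt_compat; lra]. }
    apply Rle_trans with (En * Ep * Em).
    { apply Rmult_le_compat_r; [lra|]. apply Rmult_le_reg_r with F; [lra|].
      replace (X / F * F) with X by (field; lra). lra. }
    replace (En * Ep * Em) with (Ep * (En * Em)) by ring. rewrite hee. lra. }
  assert (H2 : exp (- (d * INR n)) * sqrt (INR n + 1) <= K).
  { rewrite exp_Ropp. pose proof (exp_ineq1_le (d * INR n)).
    pose proof (exp_pos (d * INR n)).
    apply Rle_trans with ((INR n + 1) / exp (d * INR n)).
    { unfold Rdiv. rewrite Rmult_comm. apply Rmult_le_compat_r.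
      - left; apply Rinv_0_lt_compat; lra.
      - lra. }
    apply Rmult_le_reg_r with (exp (d * INR n)); [lra|].
    replace ((INR n + 1) / exp (d * INR n) * exp (d * INR n)) with (INR n + 1)
      by (field; lra).
    unfold K. apply Rle_trans with ((1 + / d) * (1 + d * INR n)).
    - replace ((1 + / d) * (1 + d * INR n)) with (1 + d * INR n + / d + INR n)
        by (field; lra).
      pose proof (Rinv_0_lt_compat d hd). nra.
    - apply Rmult_le_compat_l; [pose proof (Rinv_0_lt_compat d hd); lra|lra]. }
  assert (H3 : 1 / (3 * INR n * sqrt (INR n + 1)) <= bfun n).
  { unfold bfun.
    set (u := sqrt (1 + / INR n)).
    assert (hw : 0 < / INR n) by (apply Rinv_0_lt_compat; lra).
    assert (hw1 : / INR n <= 1).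
    { rewrite <- Rinv_1. apply Rinv_le_contravar; lra. }
    assert (hu2 : u * u = 1 + / INR n) by (unfold u; apply sqrt_sqrt; lra).
    assert (hu0 : 0 <= u) by (unfold u; apply sqrt_pos).
    assert (hu1 : 1 <= u) by nra.
    assert (hu3 : u <= 2) by nra.
    assert (hv : / INR n / 3 <= u - 1) by nra.
    replace (1 / (3 * INR n * sqrt (INR n + 1))) with
      (/ sqrt (INR n + 1) * (/ INR n / 3)) by (field; lra).
    apply Rmult_le_compat_l; [left; apply Rinv_0_lt_compat; lra|exact hv]. }
  apply Rle_trans with (A * exp (- (d * INR n)) / INR n); [exact H1|].
  apply Rle_trans with (3 * A * K * (1 / (3 * INR n * sqrt (INR n + 1)))).
  - pose proof (exp_pos (- (d * INR n))).
    replace (3 * A * K * (1 / (3 * INR n * sqrt (INR n + 1)))) with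
      (A * (K / sqrt (INR n + 1)) / INR n) by (field; lra).
    unfold Rdiv. apply Rmult_le_compat_r; [left; apply Rinv_0_lt_compat; lra|].
    apply Rmult_le_compat_l; [lra|].
    apply Rmult_le_reg_r with (sqrt (INR n + 1)); [lra|].
    replace (K * / sqrt (INR n + 1) * sqrt (INR n + 1)) with K by (field; lra).
    exact H2.
  - apply Rmult_le_compat_l; [nra|exact H3].
Qed.
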